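(* Let $p:E\to X$ be an extremally disconnected bundle. Then $\Gamma^1_p$ is a stonean sheaf (i.e. a sheaf for the dense Grothendieck topology on $\mathcal{O}(X)$), and $\Gamma^{1/2}_p=\Gamma^1_p\restriction\mathrm{RO}(X)^+$ is a sheaf both for the sup Grothendieck topology and for the dense Grothendieck topology on $\mathrm{RO}(X)^+$.
   Context: An extremally disconnected bundle is a continuous map $p:E\to X$ where $E$ is a locally compact Hausdorff space, $X$ is a compact Hausdorff extremally disconnected space (closures of open sets are open), and $p[E]$ is a dense open subset of $X$. $\beta_0(E)=E\cup\{\infty\}$ is the one-point compactification of $E$. A local section of $p$ over an open $D\subseteq X$ is a continuous $s:D\to E$ with $p\circ s=\mathrm{id}_D$. $\mathcal{O}(X)$ is the set of non-empty open subsets of $X$; for $U\in\mathcal{O}(X)$, $\Gamma^1_p(U)$ is the set of continuous $f:U\to\beta_0(E)$ such that $\{x\in U:f(x)\in E\}$ contains an open dense subset $D_f$ of $U$ with $f\restriction D_f$ a local section of $p$ over $D_f$; restriction maps are restriction of functions. $\mathrm{RO}(X)^+$ is the set of non-empty regular open sets ordered by inclusion. For a partial order $P$ and presheaf $\mathcal{F}:P^{\mathrm{op}}\to\mathbf{Set}$ (write $f\restriction s$ for $\mathcal{F}(s\le t)(f)$), a family $\{f_i\in\mathcal{F}(p_i)\}$ is compatible if $f_i\restriction r=f_j\restriction r$ for all $r\le p_i,p_j$; a collation on $p$ is $f\in\mathcal{F}(p)$ with $f\restriction r=f_i\restriction r$ for all $i$ and $r\le p,p_i$; $\{p_i\}$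 is a dense covering of $p$ if for every $q\le p$ some $s$ lies below both $q$ and some $p_i$; if $P$ has all non-empty suprema, $\{p_i\}$ is a complete covering of $p$ if each $p_i\le p$ and $\bigvee p_i=p$. $\mathcal{F}$ is a sheaf for the dense (resp. sup) Grothendieck topology if every compatible family indexed by a dense (resp. complete) covering of $p$ has a unique collation on $p$. *)

(* Defs.v *)
From HB Require Import structures.
From mathcomp Require Import all_boot all_order all_algebra.
From mathcomp Require Import all_classical all_reals all_analysis.
Set Implicit Arguments. Unset Strict Implicit. Unset Printing Implicit Defensive.
Local Open Scope classical_set_scope.

Definition extremally_disconnected (X : topologicalType) : Prop :=
  forall U : set X, open U -> open (closure U).

Definition ed_bundle (E X : topologicalType) (p : E -> X) : Prop :=
  locally_compact [set: E] /\ hausdorff_space E /\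
  compact [set: X] /\ hausdorff_space X /\ extremally_disconnected X /\
  continuous p /\ open (range p) /\ dense (range p).

(* beta_0(E) = E + {oo}, the one-point compactification (oo = None) *)
Definition beta0 (E : topologicalType) : topologicalType :=
  one_point_compactification E.

Definition Opens (X : topologicalType) : set (set X) :=
  [set U | open U /\ U !=set0].
Definition ROplus (X : topologicalType) : set (set X) :=
  [set U | regopen U /\ U !=set0].

(* A section over U is a function U -> T; we represent it by a total
   function X -> T, two representatives being equal as sections over U
   iff they agree on U.  Restriction to r is then the identity on
   representatives, read over r. *)
Definition agree_on (X T : Type) (r : set X) (f g : X -> T) : Prop :=
  forall x, r x -> f x = g x.

Definition Gamma1 (E X : topologicalType) (p : E -> X) (U : set X)
    (f : X -> beta0 E) : Prop :=
  {within U, continuous f} /\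
  exists D : set X,
    open D /\ D `<=` U /\ U `<=` closure D /\
    D `<=` [set x | exists e : E, f x = Some e] /\
    exists s : X -> E,
      {within D, continuous s} /\
      (forall x, D x -> f x = Some (s x) /\ p (s x) = x).

(* Gamma^{1/2}_p = Gamma^1_p restricted to RO(X)^+ *)
Definition Gamma_half (E X : topologicalType) (p : E -> X) :=
  @Gamma1 E X p.

Section Sheaves.
Context {X : topologicalType} {T : Type}.
Implicit Types (P : set (set X)) (V : set X).

Definition compatible_family P (I : Type) (U : I -> set X) (f : I -> X -> T) :=
  forall i j r, P r -> r `<=` U i -> r `<=` U j -> agree_on r (f i) (f j).

Definition collation P (I : Type) (U : I -> set X) (f : I -> X -> T) V
    (g : X -> T) :=
  forall i r, P r -> r `<=` V -> r `<=` U i -> agree_on r g (f i).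

Definition dense_covering P (I : Type) (U : I -> set X) V :=
  forall q, P q -> q `<=` V -> exists s i, P s /\ s `<=` q /\ s `<=` U i.

Definition complete_covering P (I : Type) (U : I -> set X) V :=
  (exists i : I, True) /\ (forall i, U i `<=` V) /\
  (forall W, P W -> (forall i, U i `<=` W) -> V `<=` W).

(* Sec V g : g (represents) an element of F(V) *)
Definition is_sheaf P (Sec : set X -> (X -> T) -> Prop)
    (cov : set (set X) -> forall I : Type, (I -> set X) -> set X -> Prop) :=
  forall (I : Type) (U : I -> set X) (f : I -> X -> T) V,
    P V -> (forall i, P (U i)) -> (forall i, Sec (U i) (f i)) ->
    cov P I U V -> compatible_family P U f ->
    (exists g, Sec V g /\ collation P U f V g) /\
    (forall g h, Sec V g -> Sec V h ->
       collation P U f V g -> collation P U f V h -> agree_on V g h).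

End Sheaves.

(* Main.v *)
Require Import Defs.
From HB Require Import structures.
From mathcomp Require Import all_boot all_order all_algebra.
From mathcomp Require Import all_classical all_reals all_analysis.
Set Implicit Arguments. Unset Strict Implicit. Unset Printing Implicit Defensive.
Local Open Scope classical_set_scope.

Lemma opc_hausdorff (E : topologicalType) :
  locally_compact [set: E] -> hausdorff_space E -> hausdorff_space (beta0 E).
Proof.
move=> lcE hE.
have sepN (a : E) : exists2 A : set (beta0 E), @nbhs _ (beta0 E) (Some a) A &
    exists2 B : set (beta0 E), @nbhs _ (beta0 E) None B & A `&` B = set0.
  have [K /= Ka [cK clK]] := lcE a I.
  have nK : nbhs a K by move: Ka; rewrite /within/=; apply: filterS => y; apply.
  exists (Some @` K); first exact: one_point_compactification_some_nbhs.
  exists (Some @` (~` K) `|` [set None]).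
    by exists K => //.
  apply/seteqP; split => // z [[y Ky <-]] [[y' nKy' [e]]|//].
  by subst; apply: nKy'.
move=> [a|] [b|] cl.
- congr Some; apply: hE => A B nA nB.
  have [z [[a' Aa' <-] [b' Bb' e]]] := cl _ _ (@one_point_compactification_some_nbhs _ _ _ nA)
    (@one_point_compactification_some_nbhs _ _ _ nB).
  by case: e => e; subst; exists a'.
- have [A nA [B nB AB]] := sepN a.
  by have [z ABz] := cl _ _ nA nB; move: ABz; rewrite AB.
- have [A nA [B nB AB]] := sepN b.
  by have [z ABz] := cl _ _ nB nA; move: ABz; rewrite setIC AB.
- by [].
Qed.

Lemma ed_disj (X : topologicalType) : extremally_disconnected X ->
  forall (O1 O2 : set X) x, open O1 -> open O2 -> O1 `&` O2 = set0 ->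
  closure O1 x -> closure O2 x -> False.
Proof.
move=> edX O1 O2 x o1 o2 O12 c1 c2.
have [y Hy] := c2 _ (open_nbhs_nbhs (conj (edX _ o1) c1)); case: Hy => O2y c1y.
have [w Ow] := c1y _ (open_nbhs_nbhs (conj o2 O2y)).
by move: Ow; rewrite O12.
Qed.

Lemma nbhs_ex (T : topologicalType) (x : T) (A : set T) :
  nbhs x A -> exists2 B, open_nbhs x B & B `<=` A.
Proof. by rewrite nbhsE. Qed.

Section Core.
Variables (E X : topologicalType) (p : E -> X).
Hypothesis edX : extremally_disconnected X.
Hypothesis regE : regular_space (beta0 E).
Hypothesis cptE : compact [set: beta0 E].

Lemma core_exists (I : Type) (U : I -> set X) (f : I -> X -> beta0 E) (V : set X) :
  open V -> V !=set0 -> (forall i, open (U i)) ->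
  (forall i, Gamma1 p (U i) (f i)) ->
  dense_covering (@Opens X) U V ->
  (forall i j x, U i x -> U j x -> f i x = f j x) ->
  exists g, Gamma1 p V g /\ (forall i x, V x -> U i x -> g x = f i x).
Proof.
move=> oV V0 oU secU cov compat.
pose A := [set x | V x /\ exists i, U i x].
have cont_f i x : U i x -> f i @ x --> f i x.
  move=> Uix; have := (secU i).1; rewrite continuous_open_subspace //.
  by move=> /(_ x (mem_set Uix)).
pose h x := match pselect (exists i, U i x) with
  | left ex => f (projT1 (cid ex)) x | right _ => None end.
have hE i x : U i x -> h x = f i x.
  move=> Uix; rewrite /h; case: pselect => [ex|nex]; last first.
    by exfalso; apply: nex; exists i.
  by case: cid => j Ujx /=; exact: compat.
have hcont x : A x -> h @ x --> h x.
  move=> [Vx [i Uix]] N; rewrite (hE i x Uix) => /(cont_f i x Uix) fN.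
  suff : nbhs x (h @^-1` N) by [].
  have {}fN : nbhs x (f i @^-1` N) := fN.
  apply: filterS (filterI fN (open_nbhs_nbhs (conj (oU i) Uix))).
  by move=> y [fy Uy] /=; rewrite (hE i y Uy).
have oA : open A.
  rewrite openE => x [Vx [i Uix]]; rewrite /interior.
  apply: filterS (open_nbhs_nbhs (conj (openI oV (oU i)) (conj Vx Uix))).
  by move=> y [Vy Uy]; split => //; exists i.
have opre W : open W -> open (A `&` h @^-1` W).
  move=> oW; rewrite openE => z [Az Wz]; rewrite /interior.
  exact: filterI (open_nbhs_nbhs (conj oA Az)) (hcont z Az W (open_nbhs_nbhs (conj oW Wz))).
have clA x : V x -> closure A x.
  move=> Vx B; rewrite nbhsE => -[Op [oO Ox] OB].
  have [|s [i [[os [z sz]] [sq sU]]]] := cov (Op `&` V) _ (@subIsetr _ Op V).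
    by split; [exact: openI | exists x].
  by exists z; have [Opz Vz] := sq z sz; split; [split => //; exists i; exact: sU| exact: OB].
pose F (x : X) : set_system (beta0 E) := h @ within A (@nbhs _ X x).
have exist_lim x : V x -> exists y : beta0 E, F x --> y.
  move=> Vx.
  have PF : ProperFilter (within A (nbhs x)) := within_nbhs_proper (clA x Vx).
  have [y [_ cly]] := @cptE (F x) _ filterT.
  exists y => N Ny.
  have [B nB cBN] := regE Ny.
  suff : nbhs x [set z | A z -> closure B (h z)].
    by rewrite /F /within /=; apply: filterS => z H Az; apply: cBN; apply: H.
  apply: contrapT => nH.
  pose O1 := A `&` h @^-1` (B°).
  pose O2 := A `&` h @^-1` (~` closure B).
  apply: (@ed_disj X edX O1 O2 x).
  - exact: opre (@open_interior _ B).
  - exact: opre (closed_openC (@closed_closure _ B)).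
  - apply/seteqP; split => // z [[_ Bz] [_ nBz]]; apply: nBz.
    exact: subset_closure (interior_subset Bz).
  - move=> M nM.
    have FM : F x (h @` (A `&` M)).
      by rewrite /F /within /=; apply: filterS nM => z Mz Az; exists z.
    have [w [[z [Az Mz] <-] Bw]] := cly _ _ FM (nbhs_interior nB).
    by exists z.
  - move=> M nM; apply: contrapT => nO2; apply: nH.
    apply: filterS nM => z Mz Az; apply: contrapT => ncz.
    by apply: nO2; exists z.
pose g x := if pselect (A x) then h x else
  match pselect (exists y : beta0 E, F x --> y) with
  | left ex => projT1 (cid ex) | right _ => None end.
have gE x : A x -> g x = h x by rewrite /g; case: pselect.
have gcvg x : V x -> F x --> g x.
  move=> Vx; rewrite /g; case: pselect => [Ax|nAx].
    move=> N Nh; have hN : nbhs x (h @^-1` N) := hcont x Ax N Nh.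
    suff : nbhs x [set z | A z -> N (h z)] by [].
    by apply: filterS hN => z Nz _.
  case: pselect => [ex|nex]; first by case: cid.
  by exfalso; apply: nex; exact: exist_lim.
have gcont : {within V, continuous g}.
  rewrite continuous_open_subspace // => x /set_mem Vx N Ngx.
  have [B nB cBN] := regE Ngx.
  have H : nbhs x [set z | A z -> B (h z)] := gcvg x Vx B nB.
  have [Op [oO Ox] OB] := nbhs_ex H.
  apply: filterS (filterI (open_nbhs_nbhs (conj oO Ox)) (open_nbhs_nbhs (conj oV Vx))).
  move=> z [Opz Vz] /=; apply: cBN.
  have PF : ProperFilter (within A (nbhs z)) := within_nbhs_proper (clA z Vz).
  apply: (closed_cvg (closure B) (@closed_closure _ B) _ _ (gcvg z Vz)).
  rewrite /within /=; apply: filterS (open_nbhs_nbhs (conj oO Opz)).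
  by move=> w Opw Aw; apply/subset_closure/OB.
have : forall i, exists Ds : set X * (X -> E),
    [/\ open Ds.1, Ds.1 `<=` U i, U i `<=` closure Ds.1,
     (forall x, Ds.1 x -> f i x = Some (Ds.2 x) /\ p (Ds.2 x) = x) &
     {within Ds.1, continuous Ds.2}].
  move=> i; have [_ [D [oD [DU [UD [_ [s [cs Hs]]]]]]]] := secU i.
  by exists (D, s); split.
move=> /choice [DS HDS].
have [x0 Vx0] := V0.
have [|s0 [i0 [[_ [z0 sz0]] [_ sU0]]]] := cov V _ (@subset_refl _ V).
  by split => //; exists x0.
have [_ _ UD0 _ _] := HDS i0.
have [w0 [Dw0 _]] := UD0 z0 (sU0 z0 sz0) _ (@filterT _ _ _).
pose e0 := (DS i0).2 w0.
pose s x := match g x with Some e => e | None => e0 end.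
pose D := [set x | V x /\ exists i, (DS i).1 x].
have gD i x : V x -> (DS i).1 x -> g x = Some ((DS i).2 x) /\ s x = (DS i).2 x.
  move=> Vx Dx; have [_ DU _ Hs _] := HDS i.
  have Ux := DU x Dx.
  have gx : g x = Some ((DS i).2 x).
    by rewrite gE; [rewrite (hE i x Ux); exact: (Hs x Dx).1 | split => //; exists i].
  by split => //; rewrite /s gx.
exists g; split; last first.
  by move=> i x Vx Ux; rewrite gE ?(hE i x Ux) //; split => //; exists i.
split => //.
exists D; split.
  rewrite openE => x [Vx [i Dix]]; have [oD _ _ _ _] := HDS i; rewrite /interior.
  apply: filterS (open_nbhs_nbhs (conj (openI oV oD) (conj Vx Dix))).
  by move=> y [Vy Dy]; split => //; exists i.
split; first by move=> x [].
split.
  move=> x Vx B; rewrite nbhsE => -[Op [oO Ox] OB].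
  have [|s1 [i [[os [z sz]] [sq sU]]]] := cov (Op `&` V) _ (@subIsetr _ Op V).
    by split; [exact: openI | exists x].
  have [_ _ UD _ _] := HDS i.
  have [w [Dw sw]] := UD z (sU z sz) _ (open_nbhs_nbhs (conj os sz)).
  have [Opw Vw] := sq w sw.
  by exists w; split; [split => //; exists i | exact: OB].
split.
  by move=> x [Vx [i Dx]]; exists ((DS i).2 x); exact: (gD i x Vx Dx).1.
exists s; split.
  rewrite continuous_open_subspace; last first.
    rewrite openE => x [Vx [i Dix]]; have [oD _ _ _ _] := HDS i; rewrite /interior.
    apply: filterS (open_nbhs_nbhs (conj (openI oV oD) (conj Vx Dix))).
    by move=> y [Vy Dy]; split => //; exists i.
  move=> x /set_mem [Vx [i Dx]] N.
  have [oD _ _ _ cs] := HDS i.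
  rewrite (gD i x Vx Dx).2 => Nsx.
  have csx : (DS i).2 @ x --> (DS i).2 x.
    by move: cs; rewrite continuous_open_subspace // => /(_ x (mem_set Dx)).
  have cN : nbhs x ((DS i).2 @^-1` N) := csx N Nsx.
  suff : nbhs x (s @^-1` N) by [].
  apply: filterS (filterI cN (open_nbhs_nbhs (conj (openI oV oD) (conj Vx Dx)))).
  by move=> y [Ny [Vy Dy]] /=; rewrite (gD i y Vy Dy).2.
move=> x [Vx [i Dx]]; have [g1 s1] := gD i x Vx Dx.
have [_ _ _ Hs _] := HDS i.
by rewrite g1 s1; split => //; exact: (Hs x Dx).2.
Qed.

End Core.

Lemma core_unique (E X : topologicalType) (p : E -> X) (V : set X)
  (g h : X -> beta0 E) :
  hausdorff_space (beta0 E) -> open V -> Gamma1 p V g -> Gamma1 p V h ->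
  (forall q, Opens q -> q `<=` V -> exists s, Opens s /\ s `<=` q /\ agree_on s g h) ->
  agree_on V g h.
Proof.
move=> hO oV [cg _] [ch _] dn x Vx; apply: hO => N1 N2 n1 n2.
move: cg ch; rewrite !continuous_open_subspace // => cg ch.
have g1 : nbhs x (g @^-1` N1) := cg x (mem_set Vx) N1 n1.
have h2 : nbhs x (h @^-1` N2) := ch x (mem_set Vx) N2 n2.
have [Op [oO Ox] OB] := nbhs_ex (filterI (filterI g1 h2) (open_nbhs_nbhs (conj oV Vx))).
have [|s [[os [z sz]] [sq agz]]] := dn Op _ (fun y Oy => (OB y Oy).2).
  by split => //; exists x.
have [[gz hz] _] := OB z (sq z sz).
by exists (g z); split => //; rewrite agz.
Qed.

Lemma ro_clopen (X : topologicalType) (r : set X) :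
  extremally_disconnected X -> regopen r -> open r /\ closed r.
Proof.
move=> edX rr.
have or : open r by rewrite -rr; exact: open_interior.
split => //; have := edX _ or; rewrite interior_id => ic.
have e : r = closure r by rewrite -{1}rr ic.
exact/closure_id.
Qed.

Lemma clopen_ro (X : topologicalType) (r : set X) :
  open r -> closed r -> regopen r.
Proof.
by move=> or cr; rewrite /regopen -(proj1 (closure_id r) cr); apply/interior_id.
Qed.

Lemma closure_sub_closed (X : topologicalType) (A B : set X) :
  closed B -> A `<=` B -> closure A `<=` B.
Proof. by move=> cB AB; rewrite (proj1 (closure_id B) cB); exact: closureS. Qed.

Lemma ro_dense (X : topologicalType) (I : Type) (U : I -> set X) (V : set X) :
  extremally_disconnected X -> regopen V ->
  dense_covering (@ROplus X) U V -> dense_covering (@Opens X) U V.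
Proof.
move=> edX rV cov q [oq [z qz]] qV.
have [_ cV] := ro_clopen edX rV.
have [|s [i [[rs [w sw]] [sq sU]]]] := cov (closure q) _ (closure_sub_closed cV qV).
  split; first exact: clopen_ro (edX _ oq) (@closed_closure _ q).
  by exists z; exact: subset_closure.
have [os _] := ro_clopen edX rs.
have [y [qy sy]] := sq w sw _ (open_nbhs_nbhs (conj os sw)).
exists (q `&` s), i; split; first by split; [exact: openI | exists y].
by split => // t [_ st]; exact: sU.
Qed.

Lemma ro_complete (X : topologicalType) (I : Type) (U : I -> set X) (V : set X) :
  extremally_disconnected X -> (forall i, ROplus (U i)) ->
  complete_covering (@ROplus X) U V -> dense_covering (@Opens X) U V.
Proof.
move=> edX rU [[i0 _] [UV sup]] q [oq [z qz]] qV.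
have oU i : open (U i) by exact: (ro_clopen edX (rU i).1).1.
have ob : open (\bigcup_i U i) by apply: bigcup_open => i _; exact: oU.
have VW : V `<=` closure (\bigcup_i U i).
  apply: sup; last by move=> i u Uu; apply: subset_closure; exists i.
  split; first exact: clopen_ro (edX _ ob) (@closed_closure _ _).
  by have [_ [u Uu]] := rU i0; exists u; apply: subset_closure; exists i0.
have [w [[i _ Uw] qw]] := VW z (qV z qz) _ (open_nbhs_nbhs (conj oq qz)).
exists (q `&` U i), i; split; first by split; [exact: openI | exists w].
by split => // t [].
Qed.

Theorem mainTheorem11 (E X : topologicalType) (p : E -> X) :
  ed_bundle p ->
  is_sheaf (@Opens X) (Gamma1 p) (@dense_covering X) /\
  is_sheaf (@ROplus X) (Gamma_half p) (@complete_covering X) /\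
  is_sheaf (@ROplus X) (Gamma_half p) (@dense_covering X).
Proof.
move=> [lcE [hE [_ [_ [edX _]]]]].
have hO := opc_hausdorff lcE hE.
have cO : compact [set: beta0 E] := one_point_compactification_compact.
have rO : regular_space (beta0 E) by move=> a; exact: compact_regular hO cO filterT.
have opens_sheaf : is_sheaf (@Opens X) (Gamma1 p) (@dense_covering X).
  move=> I U f V [oV V0] PU secU cov compat.
  have pc i j x : U i x -> U j x -> f i x = f j x.
    move=> Ui Uj; apply: (compat i j (U i `&` U j)) => //.
    - by split; [exact: openI (PU i).1 (PU j).1 | exists x].
  split.
    have [g [sg cg]] := core_exists edX rO cO oV V0 (fun i => (PU i).1) secU cov pc.
    by exists g; split => // i r _ rV rU x rx; exact: cg (rV x rx) (rU x rx).
  move=> g h sg sh cg ch; apply: core_unique hO oV sg sh _ => q Pq qV.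
  have [s [i [Ps [sq sU]]]] := cov q Pq qV.
  exists s; split => //; split => // x sx.
  have sV : s `<=` V := fun y sy => qV y (sq y sy).
  by rewrite (cg i s Ps sV sU x sx) (ch i s Ps sV sU x sx).
have ro_sheaf (cov0 : set (set X) -> forall I : Type, (I -> set X) -> set X -> Prop) :
    (forall I (U : I -> set X) V, regopen V -> (forall i, ROplus (U i)) ->
      cov0 (@ROplus X) I U V -> dense_covering (@Opens X) U V) ->
    is_sheaf (@ROplus X) (Gamma_half p) cov0.
  move=> hc I U f V [rV V0] PU secU cov compat.
  have [oV cV] := ro_clopen edX rV.
  have oU i : open (U i) := (ro_clopen edX (PU i).1).1.
  have cU i : closed (U i) := (ro_clopen edX (PU i).1).2.
  have dc := hc I U V rV PU cov.
  have pc i j x : U i x -> U j x -> f i x = f j x.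
    move=> Ui Uj; apply: (compat i j (U i `&` U j)) => //.
    - split; first exact: clopen_ro (openI (oU i) (oU j)) (closedI (cU i) (cU j)).
      by exists x.
  split.
    have [g [sg cg]] := core_exists edX rO cO oV V0 oU secU dc pc.
    by exists g; split => // i r _ rV' rU x rx; exact: cg (rV' x rx) (rU x rx).
  move=> g h sg sh cg ch; apply: core_unique hO oV sg sh _ => q Pq qV.
  have [s [i [[os s0] [sq sU]]]] := dc q Pq qV.
  have sV : s `<=` V := fun y sy => qV y (sq y sy).
  have Pr : ROplus (closure s).
    split; first exact: clopen_ro (edX _ os) (@closed_closure _ s).
    by have [z sz] := s0; exists z; exact: subset_closure.
  have rV' := closure_sub_closed cV sV.
  have rU := closure_sub_closed (cU i) sU.
  exists s; split => //; split => // x sx.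
  by rewrite (cg i _ Pr rV' rU x (subset_closure sx)) (ch i _ Pr rV' rU x (subset_closure sx)).
split => //; split; apply: ro_sheaf.
- by move=> I U V rV PU; exact: ro_complete edX PU.
- by move=> I U V rV PU; exact: ro_dense edX rV.
Qed.
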